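(* Let $A\in\mathbb{R}^{n\times n}$, $C\in\mathbb{R}^{q\times n}$, $F\in\mathbb{R}^{n\times q}$, $c>0$, let $L=(l_{ij})\in\mathbb{R}^{m\times m}$ be irreducible with $\mathrm{Rank}(L)=m-1$, $l_{ij}\ge0$ for $i\ne j$, $\sum_jl_{ij}=0$, let $\varepsilon>0$ and let $\tilde L=(\tilde l_{ij})$ be $L$ with $l_{11}$ replaced by $l_{11}-\varepsilon$. Let $0>\lambda_1\ge\dots\ge\lambda_m$ be the eigenvalues of $\tilde L$. Suppose either (1) all variational equations $\frac{dz(t)}{dt}=[A+c\lambda_kFC]z(t)$, $k=1,\dots,m$, are exponentially stable; or (2) there exist a positive definite $P$ and $\epsilon>0$ with $\{P(A+c\lambda_kFC)\}^s<-\epsilon I_n$, $k=1,\dots,m$. Then $0$ is exponentially stable for the coupled system $$\dot x_i(t)=Ax_i(t)+c\sum_{j=1}^m\tilde l_{ij}FCx_j(t),\qquad i=1,\dots,m.$$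
   Context: For a square matrix $M$, $\{M\}^s=\frac12(M+M^T)$; $M<-\epsilon I$ means $M+\epsilon I$ is negative definite. *)

(* Defs.v *)
From HB Require Import structures.
From mathcomp Require Import all_boot all_order all_algebra.
From mathcomp Require Import all_classical all_reals all_analysis.
Set Implicit Arguments. Unset Strict Implicit. Unset Printing Implicit Defensive.
Import Order.TTheory GRing.Theory Num.Theory.
Import numFieldNormedType.Exports.
Local Open Scope ring_scope.

Section Defs.
Variable R : realType.

Definition qform (n : nat) (M : 'M[R]_n) (v : 'cV[R]_n) : R := (v^T *m M *m v) 0 0.

Definition sympart (n : nat) (M : 'M[R]_n) : 'M[R]_n := 2^-1 *: (M + M^T).

Definition posdef (n : nat) (P : 'M[R]_n) : Prop :=
  P^T = P /\ forall v : 'cV[R]_n, v != 0 -> 0 < qform P v.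

Definition negdef (n : nat) (M : 'M[R]_n) : Prop :=
  M^T = M /\ forall v : 'cV[R]_n, v != 0 -> qform M v < 0.

(* irreducible: no nonempty proper index set S with L i j = 0 for all i in S, j notin S
   (equivalently, no permutation brings L to block triangular form) *)
Definition irreducible_mx (m : nat) (L : 'M[R]_m) : Prop :=
  forall S : {set 'I_m}, (0 < #|S|)%N -> (#|S| < m)%N ->
    exists i, exists j, [/\ i \in S, j \notin S & L i j != 0].

Definition pinned (m : nat) (L : 'M[R]_m) (eps : R) : 'M[R]_m :=
  \matrix_(i, j) (if (i == j) && (nat_of_ord i == 0%N) then L i j - eps else L i j).

Definition lin_exp_stable (n : nat) (M : 'M[R]_n) : Prop :=
  exists K gamma : R, 0 < gamma /\
    forall z : R -> 'cV[R]_n,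
      (forall t : R, is_derive t (1 : R) z (M *m z t)) ->
      forall t, 0 <= t -> `|z t| <= K * expR (- gamma * t) * `|z 0|.

Definition coupled_solution (n q m : nat) (A : 'M[R]_n) (C : 'M[R]_(q, n))
  (F : 'M[R]_(n, q)) (c : R) (Lt : 'M[R]_m) (x : 'I_m -> R -> 'cV[R]_n) : Prop :=
  forall i (t : R), is_derive t (1 : R) (x i)
    (A *m x i t + c *: \sum_(j < m) Lt i j *: (F *m (C *m x j t))).

Definition coupled_exp_stable (n q m : nat) (A : 'M[R]_n) (C : 'M[R]_(q, n))
  (F : 'M[R]_(n, q)) (c : R) (Lt : 'M[R]_m) : Prop :=
  exists K gamma : R, 0 < gamma /\
    forall x : 'I_m -> R -> 'cV[R]_n, coupled_solution A C F c Lt x ->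
      forall t, 0 <= t ->
        \sum_(i < m) `|x i t| <= K * expR (- gamma * t) * \sum_(i < m) `|x i 0|.
End Defs.

(* Main.v *)
Require Import Defs.
From HB Require Import structures.
From mathcomp Require Import all_boot all_order all_algebra.
From mathcomp Require Import all_classical all_reals all_analysis.
From mathcomp Require Import ring lra.
Import Order.TTheory GRing.Theory Num.Theory.
Import numFieldNormedType.Exports.
Local Open Scope ring_scope.

Set Implicit Arguments. Unset Strict Implicit. Unset Printing Implicit Defensive.

Section H.
Local Open Scope classical_set_scope.
Local Open Scope ring_scope.
Variable R : realType.

Lemma mxnorm_le (p q : nat) (v : 'M[R]_(p,q)) (C : R) : 0 <= C ->
  (forall i j, `|v i j| <= C) -> `|v| <= C.
Proof.
move=> C0 H; rewrite [leLHS]/Num.Def.normr/= mx_normrE.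
by apply: bigmax_le => // -[i j] _; exact: H.
Qed.

Lemma mxnorm_entry (p q : nat) (v : 'M[R]_(p,q)) i j : `|v i j| <= `|v|.
Proof.
rewrite [leRHS]/Num.Def.normr/= mx_normrE.
exact: (le_bigmax _ _ (i, j)).
Qed.

Definition mxbound (p q : nat) (N : 'M[R]_(p,q)) : R :=
  \sum_(i < p) \sum_(j < q) `|N i j|.

Lemma mxbound_ge0 (p q : nat) (N : 'M[R]_(p,q)) : 0 <= mxbound N.
Proof. by apply: sumr_ge0 => i _; apply: sumr_ge0. Qed.

Lemma mxbound_row (p q : nat) (N : 'M[R]_(p,q)) i :
  \sum_(j < q) `|N i j| <= mxbound N.
Proof.
rewrite /mxbound (bigD1 i) //= lerDl.
by apply: sumr_ge0 => k _; apply: sumr_ge0.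
Qed.

Lemma mxbound_entry (p q : nat) (N : 'M[R]_(p,q)) i j :
  `|N i j| <= mxbound N.
Proof.
apply: le_trans (mxbound_row N i).
by rewrite (bigD1 j) //= lerDl; apply: sumr_ge0.
Qed.

Lemma mulmx_norm (p q r : nat) (N : 'M[R]_(p,q)) (v : 'M[R]_(q,r)) :
  `|N *m v| <= mxbound N * `|v|.
Proof.
apply: mxnorm_le; first by rewrite mulr_ge0 ?mxbound_ge0.
move=> i k; rewrite mxE.
apply: (le_trans (ler_norm_sum _ _ _)).
apply: (@le_trans _ _ (\sum_(j < q) `|N i j| * `|v|)).
  by apply: ler_sum => j _; rewrite normrM ler_wpM2l // mxnorm_entry.
by rewrite -mulr_suml ler_wpM2r // mxbound_row.
Qed.

Lemma is_derive_mxP (p q : nat) (f : R -> 'M[R]_(p,q)) t D :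
  is_derive t (1:R) f D <-> forall i j, is_derive t (1:R) (fun s => f s i j) (D i j).
Proof.
split.
- move=> Hd.
  have df : derivable f t 1 by case: Hd.
  have dc := (derivable_mxP f t 1).1 df.
  have E := derive_mx df; rewrite derive_val in E.
  move=> i j; apply: DeriveDef; first exact: dc.
  by rewrite E mxE.
- move=> H.
  have df : derivable f t 1.
    by apply/derivable_mxP => i j; case: (H i j).
  apply: DeriveDef => //.
  rewrite derive_mx //; apply/matrixP => i j; rewrite mxE.
  by rewrite derive_val.
Qed.

Lemma derivable_cont (f : R -> R) :
  (forall x, derivable f x 1) -> continuous f.
Proof.
move=> H x; apply: differentiable_continuous.
exact/derivable1_diffP.
Qed.

Lemma is_derive_reflect (g : R -> R) (T t d : R) :
  is_derive (T - t) (1:R) g d -> is_derive t (1:R) (fun s => g (T - s)) (- d).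
Proof.
move=> Hg.
have hf : is_derive t (1:R) (fun s : R => T - s) (-1).
  have H := @is_deriveB R R R (cst T) id t 1 0 1 (is_derive_cst _ _ _) (is_derive_id _ _).
  by rewrite sub0r in H; exact: H.
have dg : derivable g (T - t) 1 by case: Hg.
have df : derivable (fun s : R => T - s) t 1 by case: hf.
have dc : derivable (g \o (fun s : R => T - s)) t 1.
  apply/derivable1_diffP; apply: differentiable_comp.
    exact/derivable1_diffP.
  exact/derivable1_diffP.
apply: DeriveDef; first exact: dc.
rewrite -derive1E (derive1_comp df dg) !derive1E !derive_val.
by rewrite mulrN1.
Qed.

Lemma is_derive_bigsum (W : normedModType R) (p : nat) (h : 'I_p -> R -> W)
  (t : R) (dh : 'I_p -> W) :
  (forall i, is_derive t (1:R) (h i) (dh i)) ->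
  is_derive t (1:R) (fun s => \sum_(i < p) h i s) (\sum_(i < p) dh i).
Proof.
move=> H; have := is_derive_sum H.
by rewrite (_ : \sum_(i < p) h i = (fun s => \sum_(i < p) h i s)) //;
  apply/funext => s; rewrite fct_sumE.
Qed.

Lemma is_derive_mul (f g : R -> R) (t df dg : R) :
  is_derive t (1:R) f df -> is_derive t (1:R) g dg ->
  is_derive t (1:R) (fun s => f s * g s) (f t * dg + g t * df).
Proof. by move=> Hf Hg; have := is_deriveM Hf Hg. Qed.

Lemma is_derive_scal (W : normedModType R) (c : R) (f : R -> W) (t : R) (df : W) :
  is_derive t (1:R) f df -> is_derive t (1:R) (fun s => c *: f s) (c *: df).
Proof. by move=> Hf; have := is_deriveZ c Hf. Qed.

Lemma is_derive_mulmx (p q r : nat) (N : 'M[R]_(p,q)) (f : R -> 'M[R]_(q,r)) t df :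
  is_derive t (1:R) f df -> is_derive t (1:R) (fun s => N *m f s) (N *m df).
Proof.
move=> /is_derive_mxP Hf; apply/is_derive_mxP => i k.
rewrite mxE.
have -> : (fun s => (N *m f s) i k) = (fun s => \sum_(l < q) N i l *: f s l k).
  by apply/funext => s; rewrite mxE.
by apply: is_derive_bigsum => l; apply: is_derive_scal.
Qed.

Lemma is_derive_lincomp (g : R -> R) (a t d : R) :
  is_derive (a * t) (1:R) g d -> is_derive t (1:R) (fun s => g (a * s)) (a * d).
Proof.
move=> Hg.
have hf : is_derive t (1:R) (fun s : R => a * s) a.
  have H := @is_deriveZ R R R id a t 1 1 (is_derive_id _ _).
  by rewrite /GRing.scale /= mulr1 in H; exact: H.
have dg : derivable g (a * t) 1 by case: Hg.
have df : derivable (fun s : R => a * s) t 1 by case: hf.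
have dc : derivable (g \o (fun s : R => a * s)) t 1.
  apply/derivable1_diffP; apply: differentiable_comp.
    exact/derivable1_diffP.
  exact/derivable1_diffP.
apply: DeriveDef; first exact: dc.
rewrite -derive1E (derive1_comp df dg) !derive1E !derive_val.
by rewrite mulrC.
Qed.

End H.

Section Exp.
Local Open Scope classical_set_scope.
Local Open Scope ring_scope.
Variable R : realType.

Lemma cvg_bigsum (p : nat) (s : 'I_p -> nat -> R) (l : 'I_p -> R) :
  (forall k, s k @ \oo --> l k) ->
  (fun n => \sum_(k < p) s k n) @ \oo --> \sum_(k < p) l k.
Proof.
elim: p s l => [|p IH] s l H.
  rewrite big_ord0 (_ : (fun n => _) = fun _ => 0); first exact: cvg_cst.
  by apply/funext => n; rewrite big_ord0.
rewrite big_ord_recr /=.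
rewrite (_ : (fun n => _) = (fun n => \sum_(k < p) s (widen_ord (leqnSn p) k) n)
   + (fun n => s ord_max n)); last first.
  by apply/funext => n; rewrite big_ord_recr.
apply: cvgD; last exact: H.
by apply: IH => k; exact: H.
Qed.

Lemma cvg_scal (c : R) (u : nat -> R) (l : R) : u @ \oo --> l ->
  (fun n => c * u n) @ \oo --> c * l.
Proof. by move=> H; apply: cvgM => //; exact: cvg_cst. Qed.

Variable n : nat.
Variable M : 'M[R]_n.

Definition mpow k : 'M[R]_n := iter k (mulmx M) 1%:M.

Lemma mpowS k : mpow k.+1 = M *m mpow k. Proof. by []. Qed.

Lemma mpowSr k : mpow k.+1 = mpow k *m M.
Proof.
elim: k => [|k IH]; first by rewrite mpowS /mpow /= mulmx1 mul1mx.
by rewrite [LHS]mpowS [in LHS]IH mulmxA -mpowS.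
Qed.

Let N := mxbound M + 1.

Lemma N_ge1 : 1 <= N.
Proof. by rewrite /N lerDr mxbound_ge0. Qed.

Lemma mpow_bound k i j : `|mpow k i j| <= N ^+ k.
Proof.
elim: k i j => [|k IH] i j.
  rewrite /mpow /= mxE expr0; case: (i == j) => /=; by rewrite ?normr1 ?normr0.
rewrite mpowS mxE.
apply: (le_trans (ler_norm_sum _ _ _)).
apply: (@le_trans _ _ (\sum_(l < n) `|M i l| * N ^+ k)).
  by apply: ler_sum => l _; rewrite normrM ler_wpM2l.
rewrite -mulr_suml exprS ler_wpM2r ?exprn_ge0 //.
  by apply: le_trans N_ge1.
by apply: le_trans (mxbound_row M i) _; rewrite /N lerDl.
Qed.

Definition acoef (q : nat) i j : R^nat := fun k => mpow (k + q) i j / k`!%:R.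

Lemma diffs_acoef q i j : pseries_diffs (acoef q i j) = acoef q.+1 i j.
Proof.
apply/funext => k; rewrite /pseries_diffs /acoef factS natrM addSnnS.
have h1 : (k.+1%:R : R) != 0 by rewrite pnatr_eq0.
have h2 : (k`!%:R : R) != 0 by rewrite pnatr_eq0 -lt0n fact_gt0.
by rewrite invfM mulrCA mulVKf.
Qed.

Lemma cvg_acoef q i j x : cvgn (pseries (acoef q i j) x).
Proof.
apply: normed_cvg.
rewrite /normed_series_of /=.
have H : cvgn (series (N ^+ q *: exp_coeff (N * `|x|))).
  exact/is_cvg_seriesZ/is_cvg_series_exp_coeff.
have N0 : 0 <= N by apply: le_trans N_ge1.
apply: series_le_cvg H => //.
- by move=> k; rewrite /= mulr_ge0 ?exprn_ge0 ?exp_coeff_ge0 ?mulr_ge0.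
- move=> k; rewrite /= /acoef normrM normrM normfV normr_nat normrX.
  apply: (@le_trans _ _ (N ^+ (k + q) / k`!%:R * `|x| ^+ k)).
    by rewrite ler_wpM2r ?exprn_ge0 // ler_wpM2r ?invr_ge0 // mpow_bound.
  rewrite /exp_coeff /=.
  rewrite (_ : (N ^+ q *: _) k = N^+q * ((N * `|x|) ^+ k / k`!%:R)) //.
  rewrite exprMn exprD le_eqVlt; apply/orP; left; apply/eqP; ring.
Qed.

Arguments cvg_acoef : clear implicits.

Definition mexp (x : R) : 'M[R]_n :=
  \matrix_(i, j) limn (pseries (acoef 0 i j) x).

Lemma pseries_acoef1 i j x :
  pseries (acoef 1 i j) x = fun m => \sum_(l < n) M i l * pseries (acoef 0 l j) x m.
Proof.
apply/funext => m; rewrite /pseries /series /=.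
under eq_bigr do rewrite /acoef addn1 mpowS mxE mulr_suml mulr_suml.
rewrite exchange_big /=; apply: eq_bigr => l _.
by rewrite mulr_sumr; apply: eq_bigr => k _; rewrite /acoef addn0 !mulrA.
Qed.

Lemma pseries_acoef1r i j x :
  pseries (acoef 1 i j) x = fun m => \sum_(l < n) pseries (acoef 0 i l) x m * M l j.
Proof.
apply/funext => m; rewrite /pseries /series /=.
under eq_bigr do rewrite /acoef addn1 mpowSr mxE mulr_suml mulr_suml.
rewrite exchange_big /=; apply: eq_bigr => l _.
rewrite mulr_suml; apply: eq_bigr => k _.
by rewrite /acoef addn0 -!mulrA; congr (_ * _); rewrite mulrC -mulrA; congr (_ * _); rewrite mulrC.
Qed.

Lemma mexp_derive x : is_derive x (1:R) mexp (M *m mexp x).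
Proof.
apply/is_derive_mxP => i j.
have K1 : `|x| < Num.norm (`|x| + 1) by rewrite [X in _ < X]ger0_norm ?addr_ge0 // ltrDl.
have := @pseries_snd_diffs R (acoef 0 i j) (`|x| + 1) x (cvg_acoef 0 i j _).
rewrite !diffs_acoef => /(_ (cvg_acoef _ _ _ _) (cvg_acoef _ _ _ _) K1) H.
have -> : (fun s => mexp s i j) = (fun s => limn (pseries (acoef 0 i j) s)).
  by apply/funext => s; rewrite mxE.
apply: is_derive_eq H _.
rewrite mxE pseries_acoef1; apply: cvg_lim => //.
under eq_bigr do rewrite mxE.
apply: cvg_bigsum => l; apply: cvg_scal; exact: (cvg_acoef 0 l j x).
Qed.

Lemma mexp_comm x : mexp x *m M = M *m mexp x.
Proof.
apply/matrixP => i j.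
rewrite [RHS]mxE.
transitivity (limn (pseries (acoef 1 i j) x)); last first.
  rewrite pseries_acoef1; apply: cvg_lim => //.
  under eq_bigr do rewrite mxE.
  apply: cvg_bigsum => l; apply: cvg_scal; exact: (cvg_acoef 0 l j x).
rewrite pseries_acoef1r; apply/esym/cvg_lim => //.
rewrite mxE; under eq_bigr do rewrite mxE mulrC.
apply: cvg_bigsum => l.
rewrite (_ : (fun m => _) = fun m => M l j * pseries (acoef 0 i l) x m); last first.
  by apply/funext => m; rewrite mulrC.
apply: cvg_scal; exact: (cvg_acoef 0 i l x).
Qed.

Lemma mexp0 : mexp 0 = 1%:M.
Proof.
apply/matrixP => i j; rewrite mxE.
apply: cvg_lim => //; apply: cvg_near_cst; near=> m.
rewrite -(@prednK m); last by near: m; exists 1%N.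
rewrite /pseries /series /= big_nat_recl //= expr0 mulr1.
rewrite big1 ?addr0; last by move=> k _; rewrite expr0n /= mulr0.
by rewrite /acoef /= fact0 invr1 mulr1.
Unshelve. all: by end_near.
Qed.

End Exp.

Section Step.
Local Open Scope classical_set_scope.
Local Open Scope ring_scope.
Variable R : realType.
Variable n : nat.
Variable M : 'M[R]_n.

Lemma mexp_comp_derive t i l :
  is_derive t (1:R) (fun s => mexp M s i l) ((mexp M t *m M) i l).
Proof.
have := (is_derive_mxP _ _ _).1 (mexp_derive M t) i l.
by rewrite mexp_comm.
Qed.

Lemma mexp_sol (v : 'cV[R]_n) s :
  is_derive s (1:R) (fun s => mexp M s *m v) (M *m (mexp M s *m v)).
Proof.
rewrite mulmxA.
apply/is_derive_mxP => i k; rewrite mxE.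
have -> : (fun s => (mexp M s *m v) i k) = (fun s => \sum_(l < n) v l k *: mexp M s i l).
  by apply/funext => s0; rewrite mxE; apply: eq_bigr => l _; rewrite mulrC.
apply: is_derive_eq.
  apply: is_derive_bigsum => l; apply: is_derive_scal.
  exact: ((is_derive_mxP _ _ _).1 (mexp_derive M s) i l).
by apply: eq_bigr => l _; rewrite mulrC.
Qed.

Lemma mexp_bound : lin_exp_stable M ->
  exists K0 g0 : R, [/\ 0 <= K0, 0 < g0 &
    forall s (v : 'cV[R]_n), 0 <= s -> `|mexp M s *m v| <= K0 * expR (- g0 * s) * `|v|].
Proof.
case=> K0 [g0 [g0pos Hst]].
exists `|K0|, g0; split => // s v s0.
have := Hst (fun s => mexp M s *m v) (mexp_sol v) s s0.
rewrite mexp0 mul1mx => H; apply: le_trans H _.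
by rewrite ler_wpM2r // ler_wpM2r ?expR_ge0 // ler_norm.
Qed.

Lemma step : lin_exp_stable M ->
  forall K1 g1 B : R, 0 < g1 -> 0 <= B ->
  exists K g : R, 0 < g /\ forall (y u : R -> 'cV[R]_n) (X0 : R), 0 <= X0 ->
    (forall t, is_derive t (1:R) y (M *m y t + u t)) -> `|y 0| <= B * X0 ->
    (forall t, 0 <= t -> `|u t| <= K1 * expR (- g1 * t) * X0) ->
    forall t, 0 <= t -> `|y t| <= K * expR (- g * t) * X0.
Proof.
move=> Hs K1 g1 B g1pos B0.
have [K0 [g0 [K00 g0pos HE]]] := mexp_bound Hs.
pose K1' : R := `|K1|.
have K10 : 0 <= K1' by rewrite /K1' normr_ge0.
pose mu : R := Num.min g0 g1.
have mupos : 0 < mu by rewrite lt_min g0pos g1pos.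
exists (K0 * B + 2 * K0 * K1' / mu), (mu / 2); split; first by rewrite divr_gt0.
move=> y u X0 X00 Hy Hy0 Hu T T0.
have Hu' : forall t, 0 <= t -> `|u t| <= K1' * expR (- g1 * t) * X0.
  move=> t t0; apply: le_trans (Hu t t0) _.
  by rewrite ler_wpM2r // ler_wpM2r ?expR_ge0 // ler_norm.
have key : `|y T| <= (K0 * B + T * (K0 * K1')) * expR (- mu * T) * X0.
  apply: mxnorm_le.
    by rewrite mulr_ge0 // mulr_ge0 ?expR_ge0 // addr_ge0 ?mulr_ge0.
  move=> i k; rewrite (ord1 k).
  pose Phi := fun t => (mexp M (T - t) *m y t) i 0.
  pose dPhi := fun t => (mexp M (T - t) *m u t) i 0.
  have HPhi : forall t, is_derive t (1:R) Phi (dPhi t).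
    move=> t.
    have Hyc : forall l, is_derive t (1:R) (fun s => y s l 0) ((M *m y t + u t) l 0).
      by move=> l; exact: ((is_derive_mxP _ _ _).1 (Hy t) l 0).
    have HEc : forall l, is_derive t (1:R) (fun s => mexp M (T - s) i l)
        (- (mexp M (T - t) *m M) i l).
      by move=> l; exact: (@is_derive_reflect R (fun r => mexp M r i l) T t _ (mexp_comp_derive _ _ _)).
    rewrite /Phi /dPhi.
    have -> : (fun t0 => (mexp M (T - t0) *m y t0) i 0) =
      (fun t0 => \sum_(l < n) mexp M (T - t0) i l * y t0 l 0).
      by apply/funext => s; rewrite mxE.
    apply: is_derive_eq.
      by apply: is_derive_bigsum => l; exact: (is_derive_mul (HEc l) (Hyc l)).
    rewrite big_split /=.
    set E := mexp M (T - t).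
    have e1 : \sum_(l < n) E i l *: (M *m y t + u t) l 0 = (E *m (M *m y t + u t)) i 0.
      by rewrite mxE.
    have e2 : \sum_(l < n) y t l 0 *: - (E *m M) i l = - ((E *m M) *m y t) i 0.
      by rewrite mxE -sumrN; apply: eq_bigr => l _; rewrite /GRing.scale /= mulrN mulrC.
    rewrite e1 e2 mulmxDr mulmxA.
    transitivity ((E *m M *m y t) i 0 + (E *m u t) i 0 - (E *m M *m y t) i 0);
      last by rewrite addrAC subrr add0r.
    by rewrite [in LHS]mxE.
  have cont : {within `[0, T], continuous Phi}.
    apply: continuous_subspaceT; apply: derivable_cont => x.
    by case: (HPhi x).
  have [c cI Hc] := MVT_segment T0 (fun x _ => HPhi x) cont.
  have c0 : 0 <= c by move: cI; rewrite in_itv /= => /andP[].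
  have cT : c <= T by move: cI; rewrite in_itv /= => /andP[].
  have PT : Phi T = y T i 0 by rewrite /Phi subrr mexp0 mul1mx.
  have P0 : Phi 0 = (mexp M T *m y 0) i 0 by rewrite /Phi subr0.
  have eyT : y T i 0 = Phi 0 + dPhi c * T.
    by rewrite -PT -[Phi T](subrK (Phi 0)) Hc subr0 addrC.
  have b1 : `|Phi 0| <= K0 * expR (- g0 * T) * (B * X0).
    rewrite P0; apply: le_trans (mxnorm_entry _ _ _) _.
    apply: le_trans (HE _ _ T0) _.
    by rewrite ler_wpM2l // mulr_ge0 ?expR_ge0.
  have b2 : `|dPhi c| <= K0 * expR (- g0 * (T - c)) * (K1' * expR (- g1 * c) * X0).
    apply: le_trans (mxnorm_entry _ _ _) _.
    apply: le_trans (HE _ _ _) _; first by rewrite subr_ge0.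
    by rewrite ler_wpM2l ?mulr_ge0 ?expR_ge0 // Hu'.
  have muG0 : mu <= g0 by rewrite /mu ge_min lexx.
  have muG1 : mu <= g1 by rewrite /mu ge_min lexx orbT.
  have h1 : expR (- g0 * T) <= expR (- mu * T).
    by rewrite ler_expR !mulNr lerN2 ler_wpM2r.
  have h2 : expR (- g0 * (T - c)) * expR (- g1 * c) <= expR (- mu * T).
    rewrite -expRD ler_expR.
    have q1 : mu * (T - c) <= g0 * (T - c) by rewrite ler_wpM2r // subr_ge0.
    have q2 : mu * c <= g1 * c by rewrite ler_wpM2r.
    lra.
  rewrite eyT; apply: le_trans (ler_normD _ _) _.
  rewrite normrM (ger0_norm T0).
  set a := expR (- mu * T).
  have a0 : 0 <= a by exact: expR_ge0.
  have e1 : K0 * expR (- g0 * T) * (B * X0) <= K0 * B * a * X0.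
    have -> : K0 * expR (- g0 * T) * (B * X0) = (K0 * B * X0) * expR (- g0 * T) by ring.
    have -> : K0 * B * a * X0 = (K0 * B * X0) * a by ring.
    by apply: ler_wpM2l; rewrite ?mulr_ge0.
  have e2 : K0 * expR (- g0 * (T - c)) * (K1' * expR (- g1 * c) * X0) * T
      <= T * (K0 * K1') * a * X0.
    have -> : K0 * expR (- g0 * (T - c)) * (K1' * expR (- g1 * c) * X0) * T
      = (T * (K0 * K1') * X0) * (expR (- g0 * (T - c)) * expR (- g1 * c)) by ring.
    rewrite [_ * a * X0]mulrAC; apply: ler_wpM2l => //.
    by rewrite !mulr_ge0.
  apply: le_trans (lerD b1 (le_trans (ler_wpM2r T0 b2) e2)) _.
  apply: le_trans (lerD e1 (lexx _)) _.
  by rewrite -!mulrDl.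
apply: le_trans key _.
pose b := expR (- (mu / 2) * T).
have ab : expR (- mu * T) = b * b.
  by rewrite /b -expRD -mulrDl -opprD -splitr.
have b0 : 0 <= b by exact: expR_ge0.
have b1 : b <= 1 by rewrite /b expR_le1 mulNr oppr_le0 mulr_ge0 // divr_ge0 // ltW.
have hTb : T * b <= 2 / mu.
  have E1 : expR (mu / 2 * T) * b = 1 by rewrite /b mulNr expRxMexpNx_1.
  have E2 := expR_ge1Dx (mu / 2 * T).
  have E3 : mu / 2 * T * b <= 1 by nra.
  have -> : T * b = (2 / mu) * (mu / 2 * T * b).
    by field; rewrite gt_eqF.
  by rewrite -[leRHS]mulr1 ler_wpM2l // divr_ge0 // ltW.
rewrite ab.
have -> : (K0 * B + T * (K0 * K1')) * (b * b) * X0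
   = (K0 * B * b + K0 * K1' * (T * b)) * b * X0 by ring.
rewrite ler_wpM2r // ler_wpM2r //.
apply: lerD.
  by rewrite ler_piMr // mulr_ge0.
have -> : 2 * K0 * K1' / mu = K0 * K1' * (2 / mu) by ring.
by rewrite ler_wpM2l // mulr_ge0.
Qed.

End Step.

Section Lyap.
Local Open Scope classical_set_scope.
Local Open Scope ring_scope.
Variable R : realType.
Variable n : nat.
Implicit Types (P Q N : 'M[R]_n) (v : 'cV[R]_n).

Definition bil (P : 'M[R]_n) (a b : 'cV[R]_n) : R := (a^T *m P *m b) 0 0.

Lemma bilE P a b : bil P a b = \sum_(i < n) \sum_(k < n) a i 0 * P i k * b k 0.
Proof.
rewrite /bil mxE; under eq_bigr do rewrite mxE mulr_suml.
rewrite exchange_big /=; apply: eq_bigr => i _; apply: eq_bigr => k _.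
by rewrite mxE.
Qed.

Lemma qform_bil P a : qform P a = bil P a a. Proof. by []. Qed.

Lemma bil_sym P a b : P^T = P -> bil P a b = bil P b a.
Proof.
move=> sP; rewrite !bilE exchange_big /=; apply: eq_bigr => k _.
apply: eq_bigr => i _.
have -> : P i k = P k i by rewrite -{1}sP mxE.
by ring.
Qed.

Lemma bil_derive P (z : R -> 'cV[R]_n) t dz :
  is_derive t (1:R) z dz ->
  is_derive t (1:R) (fun s => bil P (z s) (z s)) (bil P dz (z t) + bil P (z t) dz).
Proof.
move=> /is_derive_mxP Hz.
have -> : (fun s => bil P (z s) (z s)) =
  (fun s => \sum_(i < n) \sum_(k < n) z s i 0 * P i k * z s k 0).
  by apply/funext => s; rewrite bilE.
have D : is_derive t (1:R) (fun s => \sum_(i < n) \sum_(k < n) z s i 0 * P i k * z s k 0)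
   (\sum_(i < n) \sum_(k < n) (z t i 0 * P i k * dz k 0 + z t k 0 * (P i k *: dz i 0))).
  apply: is_derive_bigsum; move=> i; apply: is_derive_bigsum; move=> k.
  have Hf : is_derive t (1:R) (fun s => z s i 0 * P i k) (P i k *: dz i 0).
    have := is_derive_scal (P i k) (Hz i 0).
    rewrite (_ : (fun s => P i k *: z s i 0) = (fun s => z s i 0 * P i k)) //.
    by apply/funext => s; rewrite mulrC.
  exact: (is_derive_mul Hf (Hz k 0)).
apply: is_derive_eq D _.
rewrite !bilE -big_split /=; apply: eq_bigr => i _.
rewrite -big_split /=; apply: eq_bigr => k _.
by rewrite /GRing.scale /=; ring.
Qed.

Lemma bilDl P a a' b : bil P (a + a') b = bil P a b + bil P a' b.
Proof. by rewrite /bil linearD /= !mulmxDl mxE. Qed.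
Lemma bilDr P a b b' : bil P a (b + b') = bil P a b + bil P a b'.
Proof. by rewrite /bil mulmxDr mxE. Qed.
Lemma bilZl P s a b : bil P (s *: a) b = s * bil P a b.
Proof. by rewrite /bil linearZ /= -!scalemxAl mxE. Qed.
Lemma bilZr P s a b : bil P a (s *: b) = s * bil P a b.
Proof. by rewrite /bil -scalemxAr mxE. Qed.

Lemma bil_tr N v : bil N^T v v = bil N v v.
Proof.
rewrite !bilE exchange_big /=; apply: eq_bigr => k _; apply: eq_bigr => i _.
by rewrite mxE; ring.
Qed.

Lemma qform_sympart N v : qform (sympart N) v = bil N v v.
Proof.
rewrite qform_bil /sympart /bil -scalemxAr -scalemxAl mxE mulmxDr mulmxDl mxE.
rewrite -/(bil N v v) -/(bil N^T v v) bil_tr.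
lra.
Qed.

Definition sumsq (v : 'cV[R]_n) : R := (v^T *m v) 0 0.

Lemma sumsqE v : sumsq v = \sum_(i < n) v i 0 ^+ 2.
Proof. by rewrite /sumsq mxE; apply: eq_bigr => i _; rewrite mxE expr2. Qed.

Lemma qformD P Q v : qform (P + Q) v = qform P v + qform Q v.
Proof. by rewrite /qform mulmxDr mulmxDl mxE. Qed.

Lemma qform_scalar (e : R) v : qform (e%:M : 'M[R]_n) v = e * sumsq v.
Proof. by rewrite /qform mul_mx_scalar -scalemxAl mxE. Qed.

Lemma mxnorm_sq_le (p q : nat) (v : 'M[R]_(p, q)) (S : R) : 0 <= S ->
  (forall i j, v i j ^+ 2 <= S) -> `|v| ^+ 2 <= S.
Proof.
move=> S0 H.
have : `|v| <= Num.sqrt S.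
  apply: mxnorm_le; first exact: sqrtr_ge0.
  by move=> i j; rewrite -sqrtr_sqr ler_sqrt // H.
move=> h; rewrite -(sqr_sqrtr S0).
by rewrite lerXn2r // ?nnegrE ?sqrtr_ge0.
Qed.

Lemma norm_sq_sumsq v : `|v| ^+ 2 <= sumsq v.
Proof.
apply: mxnorm_sq_le; first by rewrite sumsqE sumr_ge0 // => i _; rewrite sqr_ge0.
move=> i j; rewrite (ord1 j) sumsqE (bigD1 i) //= lerDl.
by rewrite sumr_ge0 // => k _; rewrite sqr_ge0.
Qed.

Lemma qform_upper P v : qform P v <= mxbound P * `|v| ^+ 2.
Proof.
rewrite qform_bil bilE; apply: (le_trans (ler_norm _)).
apply: (le_trans (ler_norm_sum _ _ _)).
rewrite /mxbound mulr_suml; apply: ler_sum => i _.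
apply: (le_trans (ler_norm_sum _ _ _)).
rewrite mulr_suml; apply: ler_sum => k _.
rewrite !normrM expr2.
have h1 := mxnorm_entry v i 0; have h2 := mxnorm_entry v k 0.
have h3 : 0 <= `|P i k| by [].
have -> : `|v i 0| * `|P i k| * `|v k 0| = `|P i k| * (`|v i 0| * `|v k 0|) by ring.
by rewrite ler_wpM2l // ler_pM.
Qed.

Lemma qform0 P : qform P 0 = 0.
Proof. by rewrite /qform mulmx0 mxE. Qed.

Lemma qform_ge0 P : posdef P -> forall v, 0 <= qform P v.
Proof.
move=> PD v; case: (eqVneq v 0) => [->|nz]; first by rewrite qform0.
exact/ltW/(PD.2 v nz).
Qed.

Lemma bil_delta_l P v i : bil P (delta_mx i 0) v = (P *m v) i 0.
Proof. by rewrite /bil trmx_delta -rowE -row_mul mxE. Qed.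

Lemma qform_delta P i : qform P (delta_mx i 0) = P i i.
Proof. by rewrite qform_bil bil_delta_l -colE mxE. Qed.

Lemma delta_neq0 i : (delta_mx i 0 : 'cV[R]_n) != 0.
Proof.
apply/negP => /eqP/matrixP/(_ i 0); rewrite !mxE !eqxx /= => /eqP.
by rewrite oner_eq0.
Qed.

Lemma cs P v i : posdef P -> ((P *m v) i 0) ^+ 2 <= P i i * qform P v.
Proof.
move=> PD; have sP := PD.1.
pose w := (P *m v) i 0; pose p := P i i; pose q := qform P v.
have p0 : 0 < p by rewrite /p -qform_delta; apply: PD.2; exact: delta_neq0.
pose s := - w / p.
have H := qform_ge0 PD (v + s *: delta_mx i 0).
rewrite qform_bil bilDl !bilDr !bilZl !bilZr in H.
have e1 : bil P v (delta_mx i 0) = w by rewrite bil_sym // bil_delta_l.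
have e2 : bil P (delta_mx i 0) v = w by rewrite bil_delta_l.
have e3 : bil P (delta_mx i 0) (delta_mx i 0) = p by exact: qform_delta.
have e4 : bil P v v = q by [].
rewrite e1 e2 e3 e4 in H.
have sp : s * p = - w by rewrite /s divfK // gt_eqF.
have H2 : 0 <= p * (q + s * w + (s * w + s * (s * p))) by rewrite mulr_ge0 // ltW.
have E : p * (q + s * w + (s * w + s * (s * p))) = p * q + 2 * (s * p) * w + (s * p) ^+ 2.
  by ring.
rewrite E sp in H2.
have E2 : p * q + 2 * (- w) * w + (- w) ^+ 2 = p * q - w ^+ 2 by ring.
rewrite E2 in H2.
rewrite -/w -/p -/q; lra.
Qed.

Lemma posdef_unit P : posdef P -> P \in unitmx.
Proof.
move=> PD; rewrite -row_free_unit -kermx_eq0.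
case/boolP: (kermx P == 0) => [//|nz]; exfalso.
case: (pickP (fun i => row i (kermx P) != 0)) => [i /= ri | H]; last first.
  move/negP: nz; apply; apply/eqP/row_matrixP => i.
  by move: (H i) => /= /negbFE /eqP ->; rewrite row0.
pose r := row i (kermx P).
have rP : r *m P = 0 by rewrite /r -row_mul mulmx_ker row0.
have rT : r^T != 0 by rewrite trmx_eq0.
have := PD.2 _ rT.
by rewrite /qform trmxK rP mul0mx mxE ltxx.
Qed.

Lemma qform_lower P : posdef P -> forall v,
  `|v| ^+ 2 <= mxbound (invmx P) ^+ 2 * mxbound P * qform P v.
Proof.
move=> PD v.
have PU := posdef_unit PD.
have q0 := qform_ge0 PD v.
have h1 : `|v| <= mxbound (invmx P) * `|P *m v|.
  by rewrite -{1}(mulKmx PU v); exact: mulmx_norm.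
have h2 : `|P *m v| ^+ 2 <= mxbound P * qform P v.
  apply: mxnorm_sq_le; first by rewrite mulr_ge0 ?mxbound_ge0.
  move=> i j; rewrite (ord1 j); apply: le_trans (cs v i PD) _.
  rewrite ler_wpM2r //; apply: le_trans (ler_norm _) _.
  exact: mxbound_entry.
rewrite -mulrA; apply: le_trans (lerXn2r 2 _ _ h1) _; rewrite ?nnegrE ?mulr_ge0 ?mxbound_ge0 //.
by rewrite exprMn ler_wpM2l ?exprn_ge0 ?mxbound_ge0.
Qed.

Lemma case2 (M P : 'M[R]_n) (e : R) : posdef P -> 0 < e ->
  negdef (sympart (P *m M) + e%:M) -> lin_exp_stable M.
Proof.
move=> PD e0 ND.
have sP := PD.1.
pose beta := mxbound P + 1.
have beta0 : 0 < beta by rewrite /beta ltr_wpDl ?mxbound_ge0.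
pose C := mxbound (invmx P) ^+ 2 * mxbound P.
have C0 : 0 <= C by rewrite /C mulr_ge0 ?exprn_ge0 ?mxbound_ge0.
pose a := 2 * e / beta.
have a0 : 0 < a by rewrite /a divr_gt0 // mulr_gt0.
have abeta : a * beta = 2 * e by rewrite /a divfK // gt_eqF.
pose D := C * beta + 1.
exists D, (a / 2); split; first by rewrite divr_gt0.
move=> z Hz t t0.
pose V := fun s => qform P (z s).
have HV : forall s, is_derive s (1:R) V
    (bil P (M *m z s) (z s) + bil P (z s) (M *m z s)).
  by move=> s; exact: (bil_derive P (Hz s)).
have negq : forall v, qform (sympart (P *m M)) v <= - e * sumsq v.
  move=> v; case: (eqVneq v 0) => [->|nz].
    by rewrite qform0 /sumsq mulmx0 mxE mulr0.
  have := ND.2 v nz; rewrite qformD qform_scalar => H.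
  rewrite mulNr; lra.
have dV : forall s, bil P (M *m z s) (z s) + bil P (z s) (M *m z s)
    <= - 2 * e * `|z s| ^+ 2.
  move=> s; rewrite (bil_sym (M *m z s) (z s) sP).
  have -> : bil P (z s) (M *m z s) = qform (sympart (P *m M)) (z s).
    by rewrite qform_sympart /bil !mulmxA.
  have h1 := negq (z s); have h2 := norm_sq_sumsq (z s).
  have h3 : 0 <= `|z s| ^+ 2 by rewrite exprn_ge0.
  nra.
have Vup : forall s, V s <= beta * `|z s| ^+ 2.
  move=> s; apply: le_trans (qform_upper P (z s)) _.
  by rewrite ler_wpM2r ?exprn_ge0 // /beta lerDl.
pose h := fun s => expR (a * s) * V s.
have Hh : forall s, is_derive s (1:R) h
    (expR (a * s) * (bil P (M *m z s) (z s) + bil P (z s) (M *m z s))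
     + V s * (a * expR (a * s))).
  move=> s.
  have E1 : is_derive s (1:R) (fun s => expR (a * s)) (a * expR (a * s)).
    exact: (is_derive_lincomp (is_derive_expR _)).
  exact: (is_derive_mul E1 (HV s)).
have hneg : forall s, expR (a * s) * (bil P (M *m z s) (z s) + bil P (z s) (M *m z s))
     + V s * (a * expR (a * s)) <= 0.
  move=> s.
  have E0 := expR_gt0 (a * s).
  have := dV s; have := Vup s => h1 h2.
  have h3 : a * V s <= 2 * e * `|z s| ^+ 2 by rewrite -abeta -mulrA ler_wpM2l // ltW.
  have : (bil P (M *m z s) (z s) + bil P (z s) (M *m z s)) + a * V s <= 0 by lra.
  move=> h4.
  have -> : expR (a * s) * (bil P (M *m z s) (z s) + bil P (z s) (M *m z s))
     + V s * (a * expR (a * s)) =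
     expR (a * s) * ((bil P (M *m z s) (z s) + bil P (z s) (M *m z s)) + a * V s) by ring.
  by rewrite pmulr_rle0.
have cont : {within `[0, t], continuous h}.
  apply: continuous_subspaceT; apply: derivable_cont => x.
  by case: (Hh x).
have [c cI Hc] := MVT_segment t0 (fun x _ => Hh x) cont.
have ht : h t <= h 0.
  rewrite -subr_le0 Hc subr0.
  by rewrite mulr_le0_ge0 // hneg.
have h0 : h 0 = V 0 by rewrite /h mulr0 expR0 mul1r.
have Vt : V t <= expR (- a * t) * (beta * `|z 0| ^+ 2).
  have E1 : V t = expR (- a * t) * h t.
    by rewrite /h mulrA mulNr -expRD addNr expR0 mul1r.
  rewrite E1 ler_wpM2l ?expR_ge0 //.
  by apply: le_trans ht _; rewrite h0; exact: Vup.
have zt : `|z t| ^+ 2 <= C * V t by exact: qform_lower.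
pose b := expR (- (a / 2) * t).
have b0 : 0 <= b by exact: expR_ge0.
have bb : expR (- a * t) = b * b.
  by rewrite /b -expRD -mulrDl -opprD -splitr.
have D1 : 1 <= D by rewrite /D lerDr mulr_ge0 // ltW.
have fin : `|z t| ^+ 2 <= (D * b * `|z 0|) ^+ 2.
  apply: le_trans zt _.
  apply: le_trans (ler_wpM2l C0 Vt) _.
  rewrite bb.
  have -> : C * (b * b * (beta * `|z 0| ^+ 2)) = (C * beta) * (b * `|z 0|) ^+ 2 by ring.
  have -> : (D * b * `|z 0|) ^+ 2 = D ^+ 2 * (b * `|z 0|) ^+ 2 by ring.
  apply: ler_wpM2r; first by rewrite exprn_ge0 // mulr_ge0.
  have hD : C * beta <= D by rewrite /D; lra.
  have hD2 : D <= D ^+ 2 by rewrite expr2; nra.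
  exact: le_trans hD hD2.
have nn : 0 <= D * b * `|z 0| by rewrite !mulr_ge0 // (le_trans ler01).
rewrite -/b.
have nz : 0 <= `|z t| by [].
nra.
Qed.

End Lyap.

Section Main.
Local Open Scope classical_set_scope.
Local Open Scope ring_scope.
Variable R : realType.
Variables (n q m' : nat).
Local Notation m := m'.+1.
Implicit Types (u v : 'I_m -> 'cV[R]_n).

Definition comb (d : nat) (B : 'M[R]_m) (j : 'I_m) (u : 'I_m -> 'cV[R]_d) : 'cV[R]_d :=
  \sum_(l < m) B j l *: u l.

Lemma comb_mul B1 B2 j u : comb (B1 *m B2) j u = \sum_(l < m) B1 j l *: comb B2 l u.
Proof.
rewrite /comb; under eq_bigr do rewrite mxE scaler_suml.
rewrite exchange_big /=; apply: eq_bigr => i _.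
by rewrite scaler_sumr; apply: eq_bigr => l _; rewrite scalerA.
Qed.

Lemma combB B1 B2 j u : comb (B1 - B2) j u = comb B1 j u - comb B2 j u.
Proof.
by rewrite /comb -sumrB; apply: eq_bigr => l _; rewrite !mxE scalerBl.
Qed.

Lemma comb_scal_mx (a : R) B j u : comb (a%:M *m B) j u = a *: comb B j u.
Proof.
by rewrite mul_scalar_mx /comb scaler_sumr; apply: eq_bigr => l _; rewrite mxE scalerA.
Qed.

Lemma comb1 j u : comb 1%:M j u = u j.
Proof.
rewrite /comb (bigD1 j) //= big1 ?addr0; first by rewrite mxE eqxx scale1r.
by move=> l /negbTE; rewrite mxE eq_sym => ->; rewrite scale0r.
Qed.

Lemma comb0 j u : comb 0 j u = 0.
Proof. by rewrite /comb big1 // => l _; rewrite mxE scale0r. Qed.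

Lemma mulmx_comb (p d : nat) (N : 'M[R]_(p, d)) B j (u : 'I_m -> 'cV[R]_d) :
  N *m comb B j u = \sum_(l < m) B j l *: (N *m u l).
Proof. by rewrite /comb mulmx_sumr; apply: eq_bigr => l _; rewrite scalemxAr. Qed.

Variable Lt : 'M[R]_m.
Variable lambda : 'I_m -> R.

Definition lam (k : nat) : R := lambda (inord k).

Fixpoint Qs (k : nat) : 'M[R]_m :=
  if k is k'.+1 then (Lt - (lam k')%:M) *m Qs k' else 1%:M.

Lemma Qs_comm k : Qs k *m Lt = Lt *m Qs k.
Proof.
elim: k => [|k IH].
  rewrite /Qs.
  by rewrite mul1mx mulmx1.
rewrite /= -mulmxA IH.
by rewrite !mulmxA mulmxBl mulmxBr scalar_mxC.
Qed.

Lemma Qs_horner k : Qs k = horner_mx Lt (\prod_(i < k) ('X - (lam i)%:P)).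
Proof.
elim: k => [|k IH].
  by rewrite /Qs big_ord0 -[1 in RHS]polyC1 horner_mx_C.
rewrite /= big_ord_recr /= mulrC rmorphM rmorphB /= horner_mx_X horner_mx_C -IH.
by rewrite mulmxE.
Qed.

Lemma Qs_m : char_poly Lt = \prod_(k < m) ('X - (lambda k)%:P) -> Qs m = 0.
Proof.
move=> Hc; rewrite Qs_horner.
rewrite (eq_bigr (fun k : 'I_m => 'X - (lambda k)%:P)); last first.
  by move=> i _; rewrite /lam inord_val.
by rewrite -Hc Cayley_Hamilton.
Qed.

Lemma combD B j u v : comb B j (fun l => u l + v l) = comb B j u + comb B j v.
Proof. by rewrite /comb -big_split; apply: eq_bigr => l _; rewrite scalerDr. Qed.

Lemma combZ B j (a : R) u : comb B j (fun l => a *: u l) = a *: comb B j u.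
Proof. by rewrite /comb scaler_sumr; apply: eq_bigr => l _; rewrite !scalerA mulrC. Qed.

Lemma mulmx_comb' (p d : nat) (N : 'M[R]_(p, d)) B j (u : 'I_m -> 'cV[R]_d) :
  N *m comb B j u = comb B j (fun l => N *m u l).
Proof. exact: mulmx_comb. Qed.

Variables (A : 'M[R]_n) (C : 'M[R]_(q, n)) (F : 'M[R]_(n, q)) (c : R).

Definition w k (x : 'I_m -> R -> 'cV[R]_n) j t := comb (Qs k) j (fun l => x l t).

Lemma w_derive k x j t : coupled_solution A C F c Lt x ->
  is_derive t (1:R) (w k x j)
    ((A + (c * lam k) *: (F *m C)) *m w k x j t + c *: (F *m (C *m w k.+1 x j t))).
Proof.
move=> Hx.
have D : is_derive t (1:R) (w k x j) (comb (Qs k) j (fun l =>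
    A *m x l t + c *: \sum_(i < m) Lt l i *: (F *m (C *m x i t)))).
  rewrite /w /comb; apply: is_derive_bigsum => l; apply: is_derive_scal; exact: Hx.
apply: is_derive_eq D _.
pose W := w k x j t.
pose Y := comb (Lt *m Qs k) j (fun i => F *m (C *m x i t)).
have L1 : comb (Qs k) j (fun l =>
    A *m x l t + c *: \sum_(i < m) Lt l i *: (F *m (C *m x i t))) = A *m W + c *: Y.
  rewrite combD combZ /W /w mulmx_comb /Y -Qs_comm comb_mul.
  by [].
have HY : F *m (C *m comb (Lt *m Qs k) j (x^~ t)) = Y.
  by rewrite !mulmx_comb'.
rewrite L1 /W /w /= mulmxBl combB comb_scal_mx mulmxDl.
rewrite -scalemxAl -mulmxA mulmxBr -scalemxAr mulmxBr -scalemxAr HY.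
rewrite scalerBr scalerA -addrA; congr (_ + _).
by rewrite addrC subrK.
Qed.

Lemma comb_norm (B : 'M[R]_m) j u : `|comb B j u| <= mxbound B * \sum_(l < m) `|u l|.
Proof.
rewrite /comb; apply: (le_trans (ler_norm_sum _ _ _)).
rewrite mulr_sumr; apply: ler_sum => l _.
by rewrite normrZ ler_wpM2r // mxbound_entry.
Qed.

Lemma cascade : char_poly Lt = \prod_(k < m) ('X - (lambda k)%:P) ->
  (forall k : 'I_m, lin_exp_stable (A + (c * lambda k) *: (F *m C))) ->
  forall d, (d <= m)%N -> exists K g : R, 0 < g /\ forall x,
    coupled_solution A C F c Lt x -> forall j t, 0 <= t ->
    `|w (m - d) x j t| <= K * expR (- g * t) * \sum_(l < m) `|x l 0|.
Proof.
move=> Hc Hs; elim=> [|d IH] hd.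
  exists 0, 1; split => // x Hx j t t0.
  by rewrite subn0 /w Qs_m // comb0 normr0 !mul0r.
have [K' [g' [g'0 HK']]] := IH (ltnW hd).
pose k := (m - d.+1)%N.
have kS : k.+1 = (m - d)%N by rewrite /k subnSK.
have Hk : lin_exp_stable (A + (c * lam k) *: (F *m C)) by exact: Hs.
have [K [g [g0 Hst]]] := @step _ _ _ Hk (`|c| * mxbound (F *m C) * K') g' (mxbound (Qs k)) g'0
  (mxbound_ge0 _).
exists K, g; split => // x Hx j t t0.
apply: (Hst (w k x j) (fun t => c *: (F *m (C *m w k.+1 x j t)))) => //.
- by apply: sumr_ge0 => l _.
- by move=> s; exact: w_derive.
- exact: comb_norm.
- move=> s s0; rewrite normrZ mulmxA.
  apply: (@le_trans _ _ (`|c| * (mxbound (F *m C) * `|w k.+1 x j s|))).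
    by rewrite ler_wpM2l // mulmx_norm.
  rewrite -!mulrA ler_wpM2l // ler_wpM2l ?mxbound_ge0 //.
  by rewrite kS mulrA; exact: HK'.
Qed.

Lemma main_gen : char_poly Lt = \prod_(k < m) ('X - (lambda k)%:P) ->
  (forall k : 'I_m, lin_exp_stable (A + (c * lambda k) *: (F *m C))) ->
  coupled_exp_stable A C F c Lt.
Proof.
move=> Hc Hs.
have [K [g [g0 H]]] := cascade Hc Hs (leqnn m).
exists (m%:R * K), g; split => // x Hx t t0.
apply: (@le_trans _ _ (\sum_(j < m) (K * expR (- g * t) * \sum_(l < m) `|x l 0|))).
  apply: ler_sum => j _.
  by have := H x Hx j t t0; rewrite subnn /w comb1.
rewrite sumr_const card_ord.
by rewrite -!mulrA mulr_natl.
Qed.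

End Main.

Unset Implicit Arguments. Set Strict Implicit.

Theorem theorem6 (R : realType) (n q m : nat)
  (A : 'M[R]_n) (C : 'M[R]_(q, n)) (F : 'M[R]_(n, q)) (c : R) (L : 'M[R]_m)
  (eps : R) (lambda : 'I_m -> R) :
  0 < c ->
  irreducible_mx L ->
  \rank L = m.-1 ->
  (forall i j : 'I_m, i != j -> 0 <= L i j) ->
  (forall i : 'I_m, \sum_(j < m) L i j = 0) ->
  0 < eps ->
  (* lambda_1, ..., lambda_m are the eigenvalues of Lt (with multiplicity), ordered *)
  char_poly (pinned L eps) = \prod_(k < m) ('X - (lambda k)%:P) ->
  (forall k : 'I_m, lambda k < 0) ->
  (forall k l : 'I_m, (k <= l)%N -> lambda l <= lambda k) ->
  ((forall k : 'I_m, lin_exp_stable (A + (c * lambda k) *: (F *m C)))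
   \/
   (exists (P : 'M[R]_n) (e : R), posdef P /\ 0 < e /\
      forall k : 'I_m,
        negdef (sympart (P *m (A + (c * lambda k) *: (F *m C))) + e%:M))) ->
  coupled_exp_stable A C F c (pinned L eps).
Proof.
move=> c0 _ _ _ _ eps0 Hchar _ _ Hstab.
have Hk : forall k : 'I_m, lin_exp_stable (A + (c * lambda k) *: (F *m C)).
  case: Hstab => [H|[P [e [PD [e0 H]]]]] k; first exact: H.
  exact: (case2 PD e0 (H k)).
clear Hstab; move: Hchar Hk; case: m L lambda => [|m'] L lambda Hchar Hk.
  by exists 0, 1; split => // x _ t _; rewrite !big_ord0 !mul0r.
exact: main_gen Hchar Hk.
Qed.
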